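(* Let $X,Y$ be Banach spaces, $F:X\rightrightarrows Y$ a set-valued mapping with locally closed graph, and $(\bar x,\bar y)\in\operatorname{gr}F$. Suppose there are a neighborhood $W$ of $(\bar x,\bar y)$ and numbers $c>0$, $\lambda\in[0,1)$ such that for every $(x,y)\in W\cap\operatorname{gr}F$, $$\sup_{z\in S_Y} d\big(z,\ DF(x,y)(cB_X)\big)\le\lambda.$$ Then $\operatorname{sur}F(\bar x|\bar y)\ge\frac{1-\lambda}{c}$.
   Context: $S_Y$ is the unit sphere, $B_X$ the closed unit ball. The contingent cone $T(Q,z)$ to $Q$ at $z\in Q$ is the set of $h$ for which there are $t_k\searrow0$, $h_k\to h$ with $z+t_kh_k\in Q$. The contingent derivative is $DF(x,y)(h)=\{v:(h,v)\in T(\operatorname{gr}F,(x,y))\}$, and $DF(x,y)(cB_X)=\bigcup_{\|h\|\le c}DF(x,y)(h)$. $\operatorname{sur}F(\bar x|\bar y)$ is the supremum of $r>0$ for which there is $\varepsilon>0$ with $B(y,rt)\cap B(\bar y,\varepsilon)\subset F(B(x,t))$ for all $(x,y)\in\operatorname{gr}F$ with $\|x-\bar x\|<\varepsilon$ and all $t\ge0$ ($0$ if none). *)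

(* Defs.v *)
From Stdlib Require Import Reals Lra.
Open Scope R_scope.
Set Implicit Arguments.

Record NormedSpace := {
  ns_car :> Type;
  ns_zero : ns_car;
  ns_add : ns_car -> ns_car -> ns_car;
  ns_opp : ns_car -> ns_car;
  ns_scal : R -> ns_car -> ns_car;
  ns_norm : ns_car -> R;
  ns_addA : forall x y z, ns_add x (ns_add y z) = ns_add (ns_add x y) z;
  ns_addC : forall x y, ns_add x y = ns_add y x;
  ns_add0 : forall x, ns_add ns_zero x = x;
  ns_addN : forall x, ns_add (ns_opp x) x = ns_zero;
  ns_scalA : forall a b x, ns_scal a (ns_scal b x) = ns_scal (a * b) x;
  ns_scal1 : forall x, ns_scal 1 x = x;
  ns_scalDr : forall a x y, ns_scal a (ns_add x y) = ns_add (ns_scal a x) (ns_scal a y);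
  ns_scalDl : forall a b x, ns_scal (a + b) x = ns_add (ns_scal a x) (ns_scal b x);
  ns_norm_ge0 : forall x, 0 <= ns_norm x;
  ns_norm_eq0 : forall x, ns_norm x = 0 -> x = ns_zero;
  ns_normZ : forall a x, ns_norm (ns_scal a x) = Rabs a * ns_norm x;
  ns_normD : forall x y, ns_norm (ns_add x y) <= ns_norm x + ns_norm y
}.

Arguments ns_zero {_}.
Arguments ns_add {_}.
Arguments ns_opp {_}.
Arguments ns_scal {_}.
Arguments ns_norm {_}.

Definition ns_sub {X : NormedSpace} (x y : X) : X := ns_add x (ns_opp y).
Definition ns_dist {X : NormedSpace} (x y : X) : R := ns_norm (ns_sub x y).

Definition seq_lim {X : NormedSpace} (u : nat -> X) (l : X) : Prop :=
  forall eps, 0 < eps -> exists N, forall n, (N <= n)%nat -> ns_dist (u n) l < eps.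

Definition seq_cauchy {X : NormedSpace} (u : nat -> X) : Prop :=
  forall eps, 0 < eps -> exists N, forall m n, (N <= m)%nat -> (N <= n)%nat ->
    ns_dist (u m) (u n) < eps.

Record BanachSpace := {
  bs_ns :> NormedSpace;
  bs_complete : forall u : nat -> bs_ns, seq_cauchy u -> exists l, seq_lim u l
}.

(* Set-valued maps F : X =>> Y are given by their graph relation F x y (y in F x). *)

(* gr F is a locally closed subset of X x Y (product metric = max of the norms):
   every point of gr F has a closed ball whose intersection with gr F is closed
   (closedness expressed sequentially, which is equivalent in metric spaces). *)
Definition graph_locally_closed {X Y : NormedSpace} (F : X -> Y -> Prop) : Prop :=
  forall x0 y0, F x0 y0 -> exists r, 0 < r /\
    forall (u : nat -> X) (w : nat -> Y) x y,
      (forall n, F (u n) (w n) /\ ns_dist (u n) x0 <= r /\ ns_dist (w n) y0 <= r) ->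
      seq_lim u x -> seq_lim w y -> ns_dist x x0 <= r -> ns_dist y y0 <= r -> F x y.

(* Contingent derivative: v in DF(x,y)(h) iff (h,v) in T(gr F,(x,y)), i.e. there are
   t_k decreasing to 0 (t_k > 0) and (h_k, v_k) -> (h, v) with (x,y) + t_k (h_k,v_k) in gr F. *)
Definition contingent_derivative {X Y : NormedSpace} (F : X -> Y -> Prop)
  (x : X) (y : Y) (h : X) (v : Y) : Prop :=
  exists (t : nat -> R) (hk : nat -> X) (vk : nat -> Y),
    (forall k, 0 < t k) /\ (forall k, t (S k) <= t k) /\ Un_cv t 0 /\
    seq_lim hk h /\ seq_lim vk v /\
    (forall k, F (ns_add x (ns_scal (t k) (hk k))) (ns_add y (ns_scal (t k) (vk k)))).

Definition DF_image_ball {X Y : NormedSpace} (F : X -> Y -> Prop)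
  (x : X) (y : Y) (c : R) (v : Y) : Prop :=
  exists h, ns_norm h <= c /\ contingent_derivative F x y h v.

(* d(z, A) <= l, where d(z,A) = inf_{a in A} ||z - a|| (= +infinity if A is empty). *)
Definition dist_set_le {Y : NormedSpace} (z : Y) (A : Y -> Prop) (l : R) : Prop :=
  forall eps, 0 < eps -> exists a, A a /\ ns_dist z a < l + eps.

(* r is admissible in the definition of sur F(xb|yb):
   exists eps > 0 s.t. B(y, r t) /\ B(yb, eps) is contained in F(B(x,t))
   for all (x,y) in gr F with ||x - xb|| < eps and all t >= 0 (open balls). *)
Definition sur_admissible {X Y : NormedSpace} (F : X -> Y -> Prop)
  (xb : X) (yb : Y) (r : R) : Prop :=
  exists eps, 0 < eps /\
    forall x y t, F x y -> ns_dist x xb < eps -> 0 <= t ->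
      forall v, ns_dist v y < r * t -> ns_dist v yb < eps ->
        exists u, ns_dist u x < t /\ F u v.

(* sur F(xb|yb) = sup { r > 0 | r admissible } (0 if the set is empty; possibly +infinity).
   sur_ge F xb yb a  <->  sur F(xb|yb) >= a  (unfolding of sup(S u {0}) >= a). *)
Definition sur_ge {X Y : NormedSpace} (F : X -> Y -> Prop)
  (xb : X) (yb : Y) (a : R) : Prop :=
  forall s, s < a -> s < 0 \/ exists r, 0 < r /\ s < r /\ sur_admissible F xb yb r.

(* Main.v *)
Require Import Defs.
From Stdlib Require Import Reals Lra Lia Classical ClassicalEpsilon.
Open Scope R_scope.
Lemma eps_small : forall e, 0 < e -> exists N, / (INR N + 1) < e.
Proof.
  intros e He. destruct (archimed_cor1 e He) as [N [H1 H2]].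
  exists N. apply Rle_lt_trans with (/ INR N); auto.
  apply Rinv_le_contravar. apply lt_0_INR; auto. lra.
Qed.

Lemma le_eps (a b c : R) : 0 <= c -> (forall e, 0 < e -> a <= b + c * e) -> a <= b.
Proof.
  intros Hc H. destruct (Rle_dec a b) as [|Hn]; auto.
  exfalso. assert (Hp : 0 < (a - b) / (c + 1)).
  { apply Rdiv_lt_0_compat; lra. }
  specialize (H _ Hp).
  assert (c * ((a - b) / (c + 1)) < a - b).
  { unfold Rdiv. rewrite <- Rmult_assoc.
    apply Rlt_le_trans with ((c+1) * (a - b) * / (c+1)).
    apply Rmult_lt_compat_r. apply Rinv_0_lt_compat; lra. nra.
    right. field. lra. }
  lra.
Qed.

Lemma ekeland (P : Type) (D : P -> P -> R) (G : P -> Prop) (f : P -> R) (K r : R) :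
  (forall p q, D p q = D q p) -> (forall p q s, D p s <= D p q + D q s) ->
  (forall p, D p p = 0) -> (forall p q, 0 <= D p q) ->
  (forall s : nat -> P, (forall n, G (s n)) ->
     (forall e, 0 < e -> exists N, forall m n, (N <= m)%nat -> (N <= n)%nat -> D (s m) (s n) < e) ->
     exists l, G l /\ forall e, 0 < e -> exists N, forall n, (N <= n)%nat -> D (s n) l < e) ->
  (forall p, 0 <= f p) -> 0 <= K -> (forall p q, f p - f q <= K * D p q) -> 0 < r ->
  forall p0, G p0 -> exists ps, G ps /\ f ps + r * D ps p0 <= f p0 /\
     forall q, G q -> f ps <= f q + r * D q ps.
Proof.
  intros Dsym Dtri D0 Dpos Gcomp fpos HK fLip Hr p0 Gp0.
  set (Sr := fun p q => G q /\ f q + r * D q p <= f p).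
  assert (Srefl : forall p, G p -> Sr p p).
  { intros p Gp. split; auto. rewrite D0. lra. }
  assert (Strans : forall p q w, Sr p q -> Sr q w -> Sr p w).
  { intros p q w [Gq Hq] [Gw Hw]. split; auto.
    pose proof (Dtri w q p). nra. }
  assert (Step : forall p n, exists q, G p -> Sr p q /\
            forall q', Sr p q' -> f q - / (INR n + 1) <= f q').
  { intros p n. destruct (classic (G p)) as [Gp|nGp].
    2:{ exists p. tauto. }
    set (E := fun a => exists q, Sr p q /\ a = - f q).
    assert (Hb : bound E).
    { exists 0. intros a [q [_ ->]]. specialize (fpos q). lra. }
    assert (Hne : exists a, E a) by (exists (- f p); exists p; split; auto).
    destruct (completeness E Hb Hne) as [m [Hub Hlub]].
    pose proof (RinvN_pos n) as Hen.
    destruct (classic (exists q, Sr p q /\ m - / (INR n + 1) < - f q)) as [[q [Sq Hq]]|Hno].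
    - exists q. intros _. split; auto. intros q' Sq'.
      assert (E (- f q')) by (exists q'; auto). specialize (Hub _ H). lra.
    - exfalso. assert (is_upper_bound E (m - / (INR n + 1))).
      { intros a [q [Sq ->]]. destruct (Rle_dec (- f q) (m - / (INR n + 1))); auto.
        exfalso; apply Hno; exists q; split; auto; lra. }
      specialize (Hlub _ H). lra. }
  set (g := fun pn : P * nat => proj1_sig (constructive_indefinite_description _ (Step (fst pn) (snd pn)))).
  assert (Hg : forall p n, G p -> Sr p (g (p, n)) /\
            forall q', Sr p q' -> f (g (p, n)) - / (INR n + 1) <= f q').
  { intros p n. unfold g. simpl.
    destruct (constructive_indefinite_description _ (Step p n)) as [q Hq]. simpl. auto. }
  set (s := nat_rect (fun _ => P) p0 (fun k q => g (q, k))).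
  assert (sS : forall n, s (S n) = g (s n, n)) by reflexivity.
  assert (s0 : s O = p0) by reflexivity.
  assert (Gs : forall n, G (s n)).
  { induction n. rewrite s0; auto. rewrite sS. apply (Hg _ _ IHn). }
  assert (Sss : forall n, Sr (s n) (s (S n))).
  { intros n. rewrite sS. apply (Hg _ _ (Gs n)). }
  assert (Schain : forall n m, (n <= m)%nat -> Sr (s n) (s m)).
  { intros n m Hnm. induction Hnm. apply Srefl, Gs. eapply Strans; eauto. }
  assert (Diam : forall n q, Sr (s (S n)) q -> r * D q (s (S n)) <= / (INR n + 1)).
  { intros n q Sq. assert (Sq' : Sr (s n) q) by (eapply Strans; eauto).
    destruct (Hg (s n) n (Gs n)) as [_ Hmin]. specialize (Hmin q Sq').
    rewrite <- sS in Hmin. destruct Sq as [_ Hq]. lra. }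
  assert (Cauchy : forall e, 0 < e -> exists N, forall m n, (N <= m)%nat -> (N <= n)%nat -> D (s m) (s n) < e).
  { intros e He. destruct (eps_small (e * r / 2)) as [N HN].
    { apply Rmult_lt_0_compat; [nra|lra]. }
    exists (S N). intros m n Hm Hn.
    pose proof (Diam N _ (Schain _ _ Hm)). pose proof (Diam N _ (Schain _ _ Hn)).
    pose proof (Dtri (s m) (s (S N)) (s n)). rewrite (Dsym (s (S N)) (s n)) in H1.
    assert (r * D (s m) (s n) <= r * (D (s m) (s (S N)) + D (s n) (s (S N)))) by (apply Rmult_le_compat_l; lra).
    assert (r * D (s m) (s n) < r * e) by lra.
    apply Rmult_lt_reg_l in H3; auto. }
  destruct (Gcomp s Gs Cauchy) as [l [Gl Hl]].
  assert (Sl : forall n, Sr (s n) l).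
  { intros n. split; auto. apply (le_eps _ _ (K + r)). lra.
    intros e He. destruct (Hl e He) as [N HN].
    set (m := Nat.max n N).
    specialize (HN m (Nat.le_max_r _ _)).
    destruct (Schain n m (Nat.le_max_l _ _)) as [_ Hm].
    pose proof (fLip l (s m)). pose proof (Dtri l (s m) (s n)).
    rewrite (Dsym l (s m)) in *. nra. }
  exists l. split; auto. split.
  { destruct (Sl O) as [_ H]. rewrite s0 in H. exact H. }
  intros q Gq. destruct (Rle_dec (f l) (f q + r * D q l)) as [|Hn]; auto.
  exfalso. assert (Slq : Sr l q) by (split; auto; lra).
  set (gap := f l - f q - r * D q l).
  assert (Hgap : 0 < gap) by (unfold gap; lra).
  destruct (eps_small (gap * r / (2 * K + 1))) as [N HN].
  { apply Rdiv_lt_0_compat. nra. lra. }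
  pose proof (Diam N q (Strans _ _ _ (Sl (S N)) Slq)).
  pose proof (Diam N l (Sl (S N))).
  pose proof (Dtri q (s (S N)) l). rewrite (Dsym (s (S N)) l) in H1.
  pose proof (fLip l q). rewrite (Dsym l q) in H2.
  pose proof (Dpos q l). pose proof (RinvN_pos N).
  set (en := / (INR N + 1)) in *.
  assert (gap * r <= 2 * K * en).
  { assert (gap <= K * D q l) by (unfold gap; nra).
    assert (r * D q l <= 2 * en) by nra.
    apply Rle_trans with (K * D q l * r). apply Rmult_le_compat_r; lra.
    nra. }
  assert (en * (2 * K + 1) < gap * r).
  { apply Rmult_lt_reg_r with (/ (2*K+1)). apply Rinv_0_lt_compat; lra.
    rewrite Rmult_assoc, Rinv_r, Rmult_1_r by lra. exact HN. }
  nra.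
Qed.


Lemma add0r {X : NormedSpace} (x : X) : ns_add x ns_zero = x.
Proof. rewrite ns_addC. apply ns_add0. Qed.

Lemma addrN {X : NormedSpace} (x : X) : ns_add x (ns_opp x) = ns_zero.
Proof. rewrite ns_addC. apply ns_addN. Qed.

Lemma add_cancel {X : NormedSpace} (a b c : X) : ns_add a b = ns_add a c -> b = c.
Proof.
  intros H. rewrite <- (ns_add0 _ b), <- (ns_add0 _ c), <- (ns_addN _ a).
  rewrite <- !ns_addA, H. reflexivity.
Qed.

Lemma scal0 {X : NormedSpace} (x : X) : ns_scal 0 x = ns_zero.
Proof.
  apply (add_cancel (ns_scal 0 x)). rewrite add0r, <- ns_scalDl. f_equal; ring.
Qed.

Lemma oppE {X : NormedSpace} (x : X) : ns_opp x = ns_scal (-1) x.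
Proof.
  apply (add_cancel x). rewrite addrN. rewrite <- (ns_scal1 _ x) at 1.
  rewrite <- ns_scalDl. replace (1 + -1) with 0 by ring. symmetry; apply scal0.
Qed.

Lemma norm0 {X : NormedSpace} : ns_norm (@ns_zero X) = 0.
Proof. rewrite <- (scal0 ns_zero), ns_normZ, Rabs_R0. ring. Qed.

Lemma norm_opp {X : NormedSpace} (x : X) : ns_norm (ns_opp x) = ns_norm x.
Proof. rewrite oppE, ns_normZ. replace (Rabs (-1)) with 1. ring. rewrite Rabs_left; lra. Qed.

Lemma opp_sub {X : NormedSpace} (x y : X) : ns_opp (ns_sub x y) = ns_sub y x.
Proof.
  unfold ns_sub. rewrite !oppE, ns_scalDr, ns_scalA.
  replace (-1 * -1) with 1 by ring. rewrite ns_scal1, ns_addC. reflexivity.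
Qed.

Lemma nd_sym {X : NormedSpace} (x y : X) : ns_dist x y = ns_dist y x.
Proof. unfold ns_dist. rewrite <- opp_sub, norm_opp. reflexivity. Qed.

Lemma nd_self {X : NormedSpace} (x : X) : ns_dist x x = 0.
Proof. unfold ns_dist, ns_sub. rewrite addrN. apply norm0. Qed.

Lemma sub_split {X : NormedSpace} (x y z : X) :
  ns_sub x z = ns_add (ns_sub x y) (ns_sub y z).
Proof.
  unfold ns_sub. rewrite ns_addA, <- (ns_addA _ x (ns_opp y) y), ns_addN, add0r.
  reflexivity.
Qed.

Lemma nd_tri {X : NormedSpace} (x y z : X) : ns_dist x z <= ns_dist x y + ns_dist y z.
Proof. unfold ns_dist. rewrite (sub_split x y z). apply ns_normD. Qed.

Lemma nd_ge0 {X : NormedSpace} (x y : X) : 0 <= ns_dist x y.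
Proof. apply ns_norm_ge0. Qed.

Lemma sub_eq0 {X : NormedSpace} (x y : X) : ns_dist x y = 0 -> x = y.
Proof.
  intros H. apply ns_norm_eq0 in H. unfold ns_sub in H.
  assert (E: ns_add (ns_add x (ns_opp y)) y = x) by (rewrite <- ns_addA, ns_addN, add0r; reflexivity).
  rewrite H, ns_add0 in E. auto.
Qed.



Lemma norm_dist0 {X : NormedSpace} (x : X) : ns_dist x ns_zero = ns_norm x.
Proof.
  unfold ns_dist, ns_sub. rewrite oppE.
  rewrite <- (scal0 ns_zero) at 1. rewrite ns_scalA, Rmult_0_r, scal0, add0r. reflexivity.
Qed.

Lemma norm_le_dist {X : NormedSpace} (a b : X) : ns_norm a <= ns_norm b + ns_dist a b.
Proof.
  rewrite <- !norm_dist0. rewrite Rplus_comm. apply nd_tri.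
Qed.

Lemma nd_add_l {X : NormedSpace} (u a : X) : ns_dist (ns_add u a) u = ns_norm a.
Proof.
  unfold ns_dist, ns_sub. rewrite <- ns_addA, (ns_addC _ a), ns_addA, addrN, ns_add0. reflexivity.
Qed.

Lemma lim_ball {X : NormedSpace} (u : nat -> X) l x0 R :
  seq_lim u l -> (forall n, ns_dist (u n) x0 <= R) -> ns_dist l x0 <= R.
Proof.
  intros Hl Hb. apply (le_eps _ _ 1). lra. intros e He.
  destruct (Hl e He) as [N HN]. specialize (HN N (le_n N)).
  pose proof (nd_tri l (u N) x0). rewrite nd_sym in HN. specialize (Hb N). lra.
Qed.

Lemma normZ_pos {X : NormedSpace} (t : R) (x : X) : 0 <= t -> ns_norm (ns_scal t x) = t * ns_norm x.
Proof. intros Ht. rewrite ns_normZ, Rabs_pos_eq; auto. Qed.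

Lemma key_ident {Y : NormedSpace} (w v vk : Y) (t n : R) : n <> 0 ->
  ns_sub (ns_add w (ns_scal t vk)) v =
  ns_add (ns_scal (1 - t / n) (ns_sub w v)) (ns_scal t (ns_sub vk (ns_scal (- / n) (ns_sub w v)))).
Proof.
  intros Hn. set (d := ns_sub w v).
  unfold ns_sub at 2. rewrite ns_scalDr, oppE, !ns_scalA.
  rewrite (ns_addC _ (ns_scal t vk)), ns_addA, <- ns_scalDl.
  replace (1 - t / n + t * -1 * - / n) with 1 by (field; auto).
  rewrite ns_scal1. unfold d, ns_sub.
  rewrite <- ns_addA, (ns_addC _ (ns_scal t vk)), ns_addA. reflexivity.
Qed.

Lemma key_bound {Y : NormedSpace} (w v vk : Y) (t : R) :
  0 < ns_dist w v -> 0 <= t -> t <= ns_dist w v ->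
  ns_dist (ns_add w (ns_scal t vk)) v <=
  (ns_dist w v - t) + t * ns_dist vk (ns_scal (- / ns_dist w v) (ns_sub w v)).
Proof.
  intros Hn Ht Htn. set (n := ns_dist w v) in *.
  unfold ns_dist at 1. rewrite (key_ident w v vk t n) by lra.
  eapply Rle_trans. apply ns_normD.
  rewrite !normZ_pos; auto.
  - fold (ns_dist w v). fold n. unfold ns_dist. right.
    field. lra.
  - assert (t / n <= 1). { apply (Rmult_le_reg_r n); auto. field_simplify; lra. }
    lra.
Qed.

Lemma z_norm {Y : NormedSpace} (w v : Y) : 0 < ns_dist w v ->
  ns_norm (ns_scal (- / ns_dist w v) (ns_sub w v)) = 1.
Proof.
  intros Hn. rewrite ns_normZ. fold (ns_dist w v).
  rewrite Rabs_left. field. lra. apply Ropp_lt_gt_0_contravar. apply Rinv_0_lt_compat; auto.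
Qed.

Lemma KL (X Y : BanachSpace) (F : X -> Y -> Prop) (xb : X) (yb : Y) (c lam r R delta : R) :
  (forall (u : nat -> X) (w : nat -> Y) x y,
      (forall n, F (u n) (w n) /\ ns_dist (u n) xb <= R /\ ns_dist (w n) yb <= R) ->
      seq_lim u x -> seq_lim w y -> ns_dist x xb <= R -> ns_dist y yb <= R -> F x y) ->
  0 < R -> R < delta -> 0 < c -> 0 <= lam -> lam < 1 -> 0 < r -> r * c < 1 - lam ->
  (forall (x : X) (y : Y), F x y -> ns_dist x xb < delta -> ns_dist y yb < delta ->
       forall z : Y, ns_norm z = 1 -> dist_set_le z (DF_image_ball F x y c) lam) ->
  forall x y v, F x y -> ns_dist x xb < R/2 -> ns_dist y v < r*R/2 -> ns_dist y v < R/2 ->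
    ns_dist v yb < R/2 ->
  exists u, F u v /\ r * ns_dist u x <= ns_dist y v.
Proof.
  intros Hcl HR HRd Hc Hl0 Hl1 Hr Hrc Hyp x y v Fxy Hx Hyv1 Hyv2 Hv.
  set (kap := 1 - lam - r * c).
  assert (Hk : 0 < kap) by (unfold kap; lra).
  assert (Hk1 : kap <= 1) by (unfold kap; nra).
  set (al := kap / (6 * r)).
  assert (Eal : al * (6 * r) = kap) by (unfold al; field; lra).
  assert (Hal : 0 < al) by (unfold al; apply Rdiv_lt_0_compat; lra).
  set (e := kap / (2 * (2 + r))).
  assert (Ee : e * (2 * (2 + r)) = kap) by (unfold e; field; lra).
  assert (He : 0 < e) by (unfold e; apply Rdiv_lt_0_compat; lra).
  assert (He1 : e <= 1/4) by nra.
  set (D := fun p q : (X * Y)%type => ns_dist (fst p) (fst q) + al * ns_dist (snd p) (snd q)).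
  set (G := fun p : (X * Y)%type => F (fst p) (snd p) /\ ns_dist (fst p) xb <= R /\ ns_dist (snd p) yb <= R).
  set (f := fun p : (X * Y)%type => ns_dist (snd p) v).
  assert (Gp0 : G (x, y)).
  { unfold G; simpl. split; auto. split. lra. pose proof (nd_tri y v yb). lra. }
  destruct (ekeland ((X * Y)%type) D G f (/ al) r) with (p0 := (x, y)) as [[u w] [Gps [E1 E2]]]; auto.
  - intros p q. unfold D. rewrite (nd_sym (fst p)), (nd_sym (snd p)). reflexivity.
  - intros p q s. unfold D. pose proof (nd_tri (fst p) (fst q) (fst s)).
    pose proof (nd_tri (snd p) (snd q) (snd s)). nra.
  - intros p. unfold D. rewrite !nd_self. ring.
  - intros p q. unfold D. pose proof (nd_ge0 (fst p) (fst q)).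
    pose proof (nd_ge0 (snd p) (snd q)). nra.
  - intros s Gs Cs.
    assert (C1 : seq_cauchy (fun n => fst (s n))).
    { intros eps Heps. destruct (Cs eps Heps) as [N HN]. exists N. intros m n Hm Hn.
      specialize (HN m n Hm Hn). unfold D in HN.
      pose proof (nd_ge0 (snd (s m)) (snd (s n))). nra. }
    assert (C2 : seq_cauchy (fun n => snd (s n))).
    { intros eps Heps. destruct (Cs (eps * al)) as [N HN]. nra. exists N. intros m n Hm Hn.
      specialize (HN m n Hm Hn). unfold D in HN.
      pose proof (nd_ge0 (fst (s m)) (fst (s n))).
      apply (Rmult_lt_reg_r al); auto. lra. }
    destruct (bs_complete X C1) as [l1 L1].
    destruct (bs_complete Y C2) as [l2 L2].
    exists (l1, l2). split.
    + assert (B1 : ns_dist l1 xb <= R).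
      { apply (lim_ball _ _ _ _ L1). intros n. apply (Gs n). }
      assert (B2 : ns_dist l2 yb <= R).
      { apply (lim_ball _ _ _ _ L2). intros n. apply (Gs n). }
      unfold G; simpl. split; auto. apply (Hcl _ _ _ _ (fun n => Gs n) L1 L2 B1 B2).
    + intros eps Heps. destruct (L1 (eps / 2)) as [N1 H1]. lra.
      destruct (L2 (eps / (2 * al))) as [N2 H2]. apply Rdiv_lt_0_compat; lra.
      exists (Nat.max N1 N2). intros n Hn. unfold D; simpl.
      specialize (H1 n ltac:(lia)). specialize (H2 n ltac:(lia)).
      assert (al * ns_dist (snd (s n)) l2 < al * (eps / (2 * al))) by (apply Rmult_lt_compat_l; auto).
      replace (al * (eps / (2 * al))) with (eps / 2) in H by (field; lra). lra.
  - intros p. apply nd_ge0.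
  - left. apply Rinv_0_lt_compat; auto.
  - intros p q. unfold f, D. pose proof (nd_tri (snd p) (snd q) v).
    pose proof (nd_ge0 (fst p) (fst q)).
    replace (/ al * (ns_dist (fst p) (fst q) + al * ns_dist (snd p) (snd q)))
      with (/ al * ns_dist (fst p) (fst q) + ns_dist (snd p) (snd q)) by (field; lra).
    assert (0 <= / al * ns_dist (fst p) (fst q)).
    { apply Rmult_le_pos; auto. left; apply Rinv_0_lt_compat; auto. }
    lra.
  - unfold f, D, G in *; simpl in *.
    destruct Gps as [Fuw [Gu Gw]].
    pose proof (nd_ge0 u x). pose proof (nd_ge0 w y). pose proof (nd_ge0 w v).
    assert (Hux : r * ns_dist u x <= ns_dist y v) by nra.
    assert (Hwv : ns_dist w v <= ns_dist y v) by nra.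
    destruct (classic (ns_dist w v = 0)) as [Hz0|Hn0].
    + apply sub_eq0 in Hz0. subst w. exists u. split; auto.
    + exfalso. set (n := ns_dist w v) in *.
      assert (Hn : 0 < n) by lra.
      assert (Hux' : ns_dist u x < R / 2).
      { apply (Rmult_lt_reg_l r); auto. lra. }
      assert (Hu : ns_dist u xb < R) by (pose proof (nd_tri u x xb); lra).
      assert (Hw : ns_dist w yb < R) by (pose proof (nd_tri w v yb) as Htw; fold n in Htw; lra).
      set (z := ns_scal (- / n) (ns_sub w v)).
      assert (Hz : ns_norm z = 1) by (apply z_norm; auto).
      destruct (Hyp u w Fuw ltac:(lra) ltac:(lra) z Hz e He) as [a [[h [Hh Hcd]] Hza]].
      destruct Hcd as [tt [hk [vk [Htp [Htd [Htc [Lh [Lv Fk]]]]]]]].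
      set (m := Rmin n (Rmin ((R - ns_dist u xb) / (c + e)) ((R - ns_dist w yb) / 3))).
      assert (Hm : 0 < m).
      { unfold m. repeat apply Rmin_pos; auto; apply Rdiv_lt_0_compat; lra. }
      destruct (Lh e He) as [N1 HN1]. destruct (Lv e He) as [N2 HN2].
      destruct (Htc m Hm) as [N3 HN3].
      set (k := Nat.max N1 (Nat.max N2 N3)).
      specialize (HN1 k ltac:(unfold k; lia)). specialize (HN2 k ltac:(unfold k; lia)).
      specialize (HN3 k ltac:(unfold k; lia)).
      set (T := tt k) in *. specialize (Htp k). fold T in Htp.
      unfold R_dist in HN3. rewrite Rminus_0_r, Rabs_pos_eq in HN3 by lra.
      assert (Tn : T <= n) by (pose proof (Rmin_l n (Rmin ((R - ns_dist u xb) / (c + e)) ((R - ns_dist w yb) / 3))); fold m in H2; lra).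
      assert (T1 : T * (c + e) <= R - ns_dist u xb).
      { pose proof (Rmin_r n (Rmin ((R - ns_dist u xb) / (c + e)) ((R - ns_dist w yb) / 3))).
        pose proof (Rmin_l ((R - ns_dist u xb) / (c + e)) ((R - ns_dist w yb) / 3)).
        fold m in H2.
        assert (T <= (R - ns_dist u xb) / (c + e)) by lra.
        apply Rmult_le_compat_r with (r := c + e) in H4; [|lra].
        replace ((R - ns_dist u xb) / (c + e) * (c + e)) with (R - ns_dist u xb) in H4 by (field; lra).
        exact H4. }
      assert (T2 : T * 3 <= R - ns_dist w yb).
      { pose proof (Rmin_r n (Rmin ((R - ns_dist u xb) / (c + e)) ((R - ns_dist w yb) / 3))).
        pose proof (Rmin_r ((R - ns_dist u xb) / (c + e)) ((R - ns_dist w yb) / 3)).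
        fold m in H2. lra. }
      assert (Nhk : ns_norm (hk k) < c + e).
      { pose proof (norm_le_dist (hk k) h). lra. }
      assert (Hza' : ns_dist a z < lam + e) by (rewrite nd_sym; auto).
      assert (Nvk : ns_norm (vk k) < 3).
      { pose proof (norm_le_dist (vk k) a). pose proof (norm_le_dist a z). lra. }
      assert (Dvz : ns_dist (vk k) z < lam + 2 * e).
      { pose proof (nd_tri (vk k) a z). lra. }
      set (q := (ns_add u (ns_scal T (hk k)), ns_add w (ns_scal T (vk k)))).
      assert (Gq : F (fst q) (snd q) /\ ns_dist (fst q) xb <= R /\ ns_dist (snd q) yb <= R).
      { simpl. split. apply Fk. split.
        - pose proof (nd_tri (ns_add u (ns_scal T (hk k))) u xb) as Ht.
          rewrite nd_add_l, normZ_pos in Ht by lra.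
          assert (T * ns_norm (hk k) <= T * (c + e)) by (apply Rmult_le_compat_l; lra). lra.
        - pose proof (nd_tri (ns_add w (ns_scal T (vk k))) w yb) as Ht.
          rewrite nd_add_l, normZ_pos in Ht by lra.
          assert (T * ns_norm (vk k) <= T * 3) by (apply Rmult_le_compat_l; lra). lra. }
      specialize (E2 q Gq). simpl in E2.
      rewrite !nd_add_l, !normZ_pos in E2 by lra.
      pose proof (key_bound w v (vk k) T Hn ltac:(lra) Tn) as Hkb. fold n z in Hkb.
      assert (T * ns_dist (vk k) z <= T * (lam + 2 * e)) by (apply Rmult_le_compat_l; lra).
      assert (T * ns_norm (hk k) <= T * (c + e)) by (apply Rmult_le_compat_l; lra).
      assert (T * ns_norm (vk k) <= T * 3) by (apply Rmult_le_compat_l; lra).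
      assert (r * (T * ns_norm (hk k) + al * (T * ns_norm (vk k))) <= r * (T * (c + e) + al * (T * 3))).
      { apply Rmult_le_compat_l; [lra|]. assert (al * (T * ns_norm (vk k)) <= al * (T * 3)) by (apply Rmult_le_compat_l; lra). lra. }
      assert (T * (lam + 2 * e) + r * (T * (c + e) + al * (T * 3)) = T * (1 - kap + e * (2 + r) + r * al * 3)) by (unfold kap; ring).
      assert (1 - kap + e * (2 + r) + r * al * 3 = 1) by nra.
      nra.
Qed.

Theorem mainTheorem7 (X Y : BanachSpace) (F : X -> Y -> Prop) (xb : X) (yb : Y)
  (c lam : R) :
  graph_locally_closed F ->
  F xb yb ->
  0 < c -> 0 <= lam -> lam < 1 ->
  (exists delta, 0 < delta /\
     forall (x : X) (y : Y), F x y -> ns_dist x xb < delta -> ns_dist y yb < delta ->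
       forall z : Y, ns_norm z = 1 -> dist_set_le z (DF_image_ball F x y c) lam) ->
  sur_ge F xb yb ((1 - lam) / c).
Proof.
  intros Hgl Fb Hc Hl0 Hl1 [delta [Hd Hyp]] s Hs.
  destruct (Rlt_dec s 0) as [Hneg|Hnn]; [left; exact Hneg|right].
  set (g := (1 - lam) / c) in *.
  assert (Eg : g * c = 1 - lam) by (unfold g; field; lra).
  set (r := (s + g) / 2).
  assert (Hr : 0 < r) by (unfold r; lra).
  assert (Hrc : r * c < 1 - lam).
  { assert (r < g) by (unfold r; lra). nra. }
  exists r. split; [exact Hr|]. split; [unfold r; lra|].
  destruct (Hgl xb yb Fb) as [r0 [Hr0 Hcl0]].
  set (Rr := Rmin r0 delta / 2).
  assert (HRr : 0 < Rr) by (unfold Rr; pose proof (Rmin_pos r0 delta Hr0 Hd); lra).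
  assert (HRr1 : Rr <= r0) by (unfold Rr; pose proof (Rmin_l r0 delta); lra).
  assert (HRr2 : Rr < delta) by (unfold Rr; pose proof (Rmin_r r0 delta); lra).
  assert (Hcl : forall (u : nat -> X) (w : nat -> Y) x y,
      (forall n, F (u n) (w n) /\ ns_dist (u n) xb <= Rr /\ ns_dist (w n) yb <= Rr) ->
      seq_lim u x -> seq_lim w y -> ns_dist x xb <= Rr -> ns_dist y yb <= Rr -> F x y).
  { intros u w x y Hn Lu Lw Bx By. apply (Hcl0 u w x y); auto; try lra.
    intros n. destruct (Hn n) as [? [? ?]]. repeat split; auto; lra. }
  pose proof (KL X Y F xb yb c lam r Rr delta Hcl HRr HRr2 Hc Hl0 Hl1 Hr Hrc Hyp) as KLi.
  set (mr := Rmin r 1).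
  assert (Hmr : 0 < mr) by (unfold mr; apply Rmin_pos; lra).
  assert (Hmr1 : mr <= r) by (unfold mr; apply Rmin_l).
  assert (Hmr2 : mr <= 1) by (unfold mr; apply Rmin_r).
  set (eps := Rr * mr / (2 * (4 + r))).
  assert (Eeps : eps * (2 * (4 + r)) = Rr * mr) by (unfold eps; field; lra).
  assert (Heps : 0 < eps) by (unfold eps; apply Rdiv_lt_0_compat; nra).
  assert (C1 : (3 + r) * eps < r * Rr / 2) by nra.
  assert (C2 : (3 + r) * eps < Rr / 2) by nra.
  exists eps. split; [exact Heps|].
  intros x y t Fxy Hx Ht v Hvy Hvb.
  destruct (Rlt_dec (ns_dist y yb) ((2 + r) * eps)) as [HA|HB].
  - assert (Hyv : ns_dist y v < (3 + r) * eps).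
    { pose proof (nd_tri y yb v). rewrite (nd_sym yb v) in H. lra. }
    destruct (KLi x y v Fxy ltac:(nra) ltac:(lra) ltac:(lra) ltac:(nra)) as [u [Fu Hu]].
    exists u. split; auto. rewrite nd_sym in Hvy.
    apply (Rmult_lt_reg_l r); auto. lra.
  - assert (Hyv : ns_dist yb v < eps) by (rewrite nd_sym; auto).

    destruct (KLi xb yb v Fb ltac:(rewrite nd_self; lra) ltac:(nra) ltac:(nra) ltac:(nra)) as [u [Fu Hu]].
    exists u. split; auto.
    pose proof (nd_tri y v yb). rewrite (nd_sym y v) in H.
    pose proof (nd_tri u xb x). rewrite (nd_sym xb x) in H0.
    apply (Rmult_lt_reg_l r); auto.
    assert (r * ns_dist u x <= r * ns_dist u xb + r * ns_dist x xb) by nra.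
    assert (r * ns_dist x xb < r * eps) by (apply Rmult_lt_compat_l; auto).
    nra.
Qed.
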